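(* Let $K$ be a finite simplicial complex, $L$ a full subcomplex, $W$ the union of the simplices of $K$ not meeting $L$, $p$ a positive even integer, $T\in C^p(K,W;\mathbb Q)$ a cocycle, $K^*$ a subcomplex of $K$ and $L^*=K^*\cap L$. For a good ordering $\mathcal O$ of $K$ with respect to $L$, the chain map $\alpha\mapsto T\overset{\mathcal O}{\cap}\alpha$ induces a homomorphism $H_{p+q}(K,K^*;\mathbb Q)\to H_q(L,L^*;\mathbb Q)$. This homomorphism is independent of the choice of the good ordering $\mathcal O$.
   Context: A subcomplex $L$ of $K$ is full if every simplex of $K$ all of whose vertices lie in $L$ belongs to $L$. $C^p(K,W;\mathbb Q)$ consists of simplicial $p$-cochains vanishing on simplices contained in $W$. An ordering of $K$ is a partial order on the vertices whose restriction to the vertices of each simplex is a total order; it is good with respect to $L$ if whenever $v$ is a vertex of $L$ and $w\ge v$, then $w$ is a vertex of $L$. For $\alpha=[v_0,\dots,v_k]$ with $v_0<\dots<v_k$, $T\overset{\mathcal O}{\cap}\alpha=T([v_0,\dots,v_p])[v_p,\dots,v_k]$, extended linearly. *)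

(* Defs.v *)
From HB Require Import structures.
From mathcomp Require Import all_boot all_order all_algebra.
Set Implicit Arguments. Unset Strict Implicit. Unset Printing Implicit Defensive.
Import Order.TTheory GRing.Theory Num.Theory.
Local Open Scope ring_scope.

Section Simplicial.
Variable V : finType.

Definition is_complex (K : {set {set V}}) : Prop :=
  (forall s : {set V}, s \in K -> s != set0) /\
  (forall s t : {set V}, s \in K -> t \subset s -> t != set0 -> t \in K).

Definition is_subcomplex (L K : {set {set V}}) : Prop :=
  is_complex L /\ L \subset K.

Definition vert (K : {set {set V}}) : {set V} := [set v | [set v] \in K].

Definition is_full (L K : {set {set V}}) : Prop :=
  forall s, s \in K -> s \subset vert L -> s \in L.

Definition far_part (K L : {set {set V}}) : {set {set V}} :=
  [set s in K | [disjoint s & vert L]].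

(* Chains and cochains: coefficient functions on simplices.  A chain c
   stands for sum_s c(s) [s], where [s] is s oriented by the increasing
   order of enum_rank (a fixed reference total order on V). *)
Notation chain := {ffun {set V} -> rat}.

Definition cscale (a : rat) (c : chain) : chain := [ffun t => a * c t].

Definition std (s : {set V}) : seq V :=
  sort (fun x y => (enum_rank x <= enum_rank y)%N) (enum s).

Fixpoint inv (s : seq V) : nat :=
  match s with
  | [::] => 0%N
  | x :: s' => (count (fun y => (enum_rank y < enum_rank x)%N) s' + inv s')%N
  end.

Definition sgn (s : seq V) : rat := (-1) ^+ inv s.

Definition osimp (s : seq V) : chain :=
  if (s != [::]) && uniq s then [ffun t : {set V} => sgn s * (t == [set x in s])%:R]
  else 0.

Definition ceval (T : chain) (s : seq V) : rat :=
  if uniq s then sgn s * T [set x in s] else 0.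

Definition delete (i : nat) (s : seq V) : seq V := take i s ++ drop i.+1 s.

Definition bdry_seq (s : seq V) : chain :=
  \sum_(i < size s) cscale ((-1) ^+ i) (osimp (delete i s)).

Definition bdry (c : chain) : chain := \sum_(s : {set V}) cscale (c s) (bdry_seq (std s)).

Definition cobdry (T : chain) : chain :=
  [ffun s => \sum_(i < size (std s)) (-1) ^+ i * ceval T (delete i (std s))].

Definition chain_in (M : {set {set V}}) (n : nat) (c : chain) : Prop :=
  forall s, c s != 0 -> s \in M /\ #|s| = n.+1.

Definition rel_cochain (K W : {set {set V}}) (p : nat) (T : chain) : Prop :=
  forall s, T s != 0 -> [/\ s \in K, #|s| = p.+1 & s \notin W].

Definition cocycle (K : {set {set V}}) (T : chain) : Prop :=
  forall s, s \in K -> cobdry T s = 0.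

Definition rel_cycle (M Ms : {set {set V}}) (n : nat) (c : chain) : Prop :=
  chain_in M n c /\ chain_in Ms n.-1 (bdry c).

Definition rel_bdry (M Ms : {set {set V}}) (n : nat) (c : chain) : Prop :=
  exists d e, [/\ chain_in M n.+1 d, chain_in Ms n e & c = bdry d + e].

Definition is_ordering (K : {set {set V}}) (O : rel V) : Prop :=
  [/\ (forall v, v \in vert K -> O v v),
      (forall v w, v \in vert K -> w \in vert K -> O v w -> O w v -> v = w),
      (forall u v w, u \in vert K -> v \in vert K -> w \in vert K ->
          O u v -> O v w -> O u w)
    & (forall s, s \in K -> forall x y, x \in s -> y \in s -> O x y || O y x)].

Definition good_ordering (K L : {set {set V}}) (O : rel V) : Prop :=
  is_ordering K O /\
  (forall v w, v \in vert L -> w \in vert K -> O v w -> w \in vert L).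

(* T cap^O c, extended linearly: for s with O-sorted vertices o = v_0<..<v_k,
   [std s] = sgn o * [o], and T cap^O [o] = T([v_0..v_p]) [v_p..v_k]. *)
Definition capO (O : rel V) (p : nat) (T c : chain) : chain :=
  \sum_(s : {set V})
    cscale (c s * sgn (sort O (enum s)) * ceval T (take p.+1 (sort O (enum s))))
      (osimp (drop p (sort O (enum s)))).

End Simplicial.
Notation chain V := {ffun {set V} -> rat}.

(* Main.v *)
Require Import Defs.
From mathcomp Require Import all_boot all_order all_algebra.
From mathcomp Require Import zify ring lra.
Set Implicit Arguments. Unset Strict Implicit. Unset Printing Implicit Defensive.
Import Order.TTheory GRing.Theory Num.Theory.
Local Open Scope ring_scope.


Notation invs := Defs.inv.
Section Comb.
Variable V : finType.
Implicit Types (s u : seq V) (A B : {set V}) (c d : chain V).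

Definition cnt (x : V) s := count (fun y => (enum_rank y < enum_rank x)%N) s.
Fixpoint cross s1 s2 : nat := if s1 is a :: s1' then (cnt a s2 + cross s1' s2)%N else 0%N.

Lemma invE x s : invs (x :: s) = (cnt x s + invs s)%N.
Proof. by []. Qed.

Lemma cnt_cat x s1 s2 : cnt x (s1 ++ s2) = (cnt x s1 + cnt x s2)%N.
Proof. by rewrite /cnt count_cat. Qed.

Lemma inv_cat s1 s2 : invs (s1 ++ s2) = (invs s1 + invs s2 + cross s1 s2)%N.
Proof.
elim: s1 => [|a s1 IH]; first by rewrite /= addn0.
rewrite cat_cons !invE IH cnt_cat /=; lia.
Qed.

Lemma cross_cons s1 x s2 :
  cross s1 (x :: s2) = (cross s1 s2 + count (fun a => (enum_rank x < enum_rank a)%N) s1)%N.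
Proof. elim: s1 => [|a s1 IH] //=; rewrite IH /cnt /=; lia. Qed.

Lemma size_split x s : x \notin s ->
  size s = (count (fun a => (enum_rank x < enum_rank a)%N) s + cnt x s)%N.
Proof.
elim: s => [|a s IH] //=; rewrite inE negb_or => /andP[xa xs].
rewrite IH //.
have : enum_rank a != enum_rank x by rewrite (inj_eq enum_rank_inj) eq_sym.
move=> /eqP H.
have : (enum_rank x < enum_rank a)%N || (enum_rank a < enum_rank x)%N.
  by rewrite -neq_ltn; apply/eqP => E; apply: H; apply: val_inj.
case/orP=> H1.
- have H2: (enum_rank a < enum_rank x)%N = false by apply/negbTE; rewrite -leqNgt ltnW.
  by rewrite H1 H2 /=; lia.
- have H2: (enum_rank x < enum_rank a)%N = false by apply/negbTE; rewrite -leqNgt ltnW.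
  by rewrite H1 H2 /=; lia.
Qed.

Lemma inv_mid s1 x s2 : x \notin s1 ->
  odd (invs (s1 ++ x :: s2) + size s1) = odd (invs (s1 ++ s2) + cnt x (s1 ++ s2)).
Proof.
move=> xs1; rewrite !inv_cat invE cross_cons cnt_cat (size_split xs1).
set g := count _ s1.
have -> : (invs s1 + (cnt x s2 + invs s2) + (cross s1 s2 + g) + (g + cnt x s1))%N =
          ((invs s1 + invs s2 + cross s1 s2 + (cnt x s1 + cnt x s2)) + g.*2)%N.
  rewrite -addnn; lia.
by rewrite oddD odd_double addbF.
Qed.

Lemma sgnE s : sgn s = (-1) ^+ invs s. Proof. by []. Qed.

Lemma sign_odd_eq (m n : nat) : odd m = odd n -> (-1) ^+ m = (-1) ^+ n :> rat.
Proof. by move=> h; rewrite -signr_odd h signr_odd. Qed.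

Lemma sign_sq (n : nat) : (-1) ^+ n * (-1) ^+ n = 1 :> rat.
Proof. by rewrite -exprD addnn -signr_odd odd_double. Qed.

Definition delete' (i : nat) s := take i s ++ drop i.+1 s.


Definition cntS (x : V) A := #|[set y in A | (enum_rank y < enum_rank x)%N]|.

Lemma cnt_cntS x u : uniq u -> cnt x u = cntS x [set y in u].
Proof.
move=> uu; rewrite /cnt /cntS -size_filter.
have uf : uniq (filter (fun y => (enum_rank y < enum_rank x)%N) u) by rewrite filter_uniq.
rewrite -(card_uniqP uf); apply: eq_card => y; rewrite !inE mem_filter andbC.
by [].
Qed.

Lemma nth_notin_take x0 u i : uniq u -> (i < size u)%N -> nth x0 u i \notin take i u.
Proof.
move=> uu hi; move: uu; rewrite -{1}(cat_take_drop i u) (drop_nth x0 hi).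
by rewrite cat_uniq /= negb_or => /and3P[_ /andP[H _] _].
Qed.

Lemma delete_uniq i u : uniq u -> uniq (delete i u).
Proof.
move=> uu; apply: (subseq_uniq _ uu); rewrite /delete.
rewrite -{3}(cat_take_drop i u); apply: cat_subseq => //.
have -> : drop i.+1 u = drop 1 (drop i u) by rewrite drop_drop add1n.
exact: drop_subseq.
Qed.

Lemma set_mid s1 x s2 : uniq (s1 ++ x :: s2) ->
  [set y in s1 ++ s2] = [set y in s1 ++ x :: s2] :\ x.
Proof.
rewrite cat_uniq /= negb_or => /and3P[_ /andP[H1 _] /andP[H2 _]].
apply/setP => y; rewrite !inE !mem_cat inE.
case: (eqVneq y x) => [->|] /=; first by rewrite (negbTE H1) (negbTE H2).
by [].
Qed.

Lemma take_nth_drop x0 i u : (i < size u)%N -> u = take i u ++ nth x0 u i :: drop i.+1 u.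
Proof. by move=> hi; rewrite -(drop_nth x0 hi) cat_take_drop. Qed.

Lemma set_delete x0 i u : uniq u -> (i < size u)%N ->
  [set y in delete i u] = [set y in u] :\ nth x0 u i.
Proof.
move=> uu hi; have Hu := take_nth_drop x0 hi.
have := @set_mid (take i u) (nth x0 u i) (drop i.+1 u); rewrite -Hu; exact.
Qed.

Lemma sign_delete x0 i u : uniq u -> (i < size u)%N ->
  (-1) ^+ i * sgn (delete i u) = sgn u * (-1) ^+ cntS (nth x0 u i) [set y in u].
Proof.
move=> uu hi.
have Hn := nth_notin_take x0 uu hi.
have Hm := inv_mid (drop i.+1 u) Hn.
have Hu := take_nth_drop x0 hi.
set x := nth x0 u i in Hn Hm Hu *.
have sz : size (take i u) = i by rewrite size_take hi.
rewrite -Hu sz in Hm.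
have Hc : cnt x (take i u ++ drop i.+1 u) = cnt x u.
  rewrite [in RHS]Hu !cnt_cat /cnt /= ltnn; lia.
rewrite Hc (cnt_cntS _ uu) in Hm.
rewrite !sgnE -!exprD; apply: sign_odd_eq.
move: Hm; rewrite /delete !oddD.
by case: (odd i); case: (odd (invs u)); case: (odd (invs _)); case: (odd (cntS _ _)).
Qed.

Lemma sum_nth_set (M : nmodType) x0 u (G : V -> M) : uniq u ->
  \sum_(i < size u) G (nth x0 u i) = \sum_(x in [set y in u]) G x.
Proof.
move=> uu; have := @big_nth M 0 +%R V x0 u xpredT G; rewrite big_mkord => <-.
rewrite big_uniq //; apply: eq_bigl => y; by rewrite !inE.
Qed.

End Comb.


Section Chains.
Variable V : finType.
Implicit Types (u : seq V) (A B : {set V}) (c d : chain V).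

Definition e A : chain V := [ffun t => (t == A)%:R].
Definition E A : chain V := [ffun t => ((t == A) && (A != set0))%:R].
Definition ext (F : {set V} -> chain V) c : chain V := \sum_(s : {set V}) cscale (c s) (F s).
Definition Bd A : chain V := \sum_(x in A) cscale ((-1) ^+ cntS x A) (E (A :\ x)).
Definition CB (T : chain V) A : rat := \sum_(x in A) (-1) ^+ cntS x A * T (A :\ x).

Lemma cscaleE a c t : cscale a c t = a * c t. Proof. by rewrite ffunE. Qed.

Lemma extE F c t : ext F c t = \sum_(s : {set V}) c s * F s t.
Proof. by rewrite /ext sum_ffunE; apply: eq_bigr => s _; rewrite cscaleE. Qed.

Lemma set_nil : [set y in ([::] : seq V)] = set0.
Proof. by apply/setP => y; rewrite !inE. Qed.

Lemma set_cons_n0 x u : [set y in x :: u] != set0.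
Proof. by apply/set0Pn; exists x; rewrite inE mem_head. Qed.

Lemma osimpE u : uniq u -> osimp u = cscale (sgn u) (E [set y in u]).
Proof.
move=> uu; apply/ffunP => t; rewrite /osimp uu andbT cscaleE.
case: u uu => [|x u] uu /=; first by rewrite set_nil !ffunE eqxx andbF mulr0.
by rewrite !ffunE set_cons_n0 andbT.
Qed.

Lemma cevalE (T : chain V) u : uniq u -> ceval T u = sgn u * T [set y in u].
Proof. by move=> uu; rewrite /ceval uu. Qed.

Lemma alt_sum (phi : {set V} -> rat) u : uniq u ->
  \sum_(i < size u) (-1) ^+ i * (sgn (delete i u) * phi [set y in delete i u]) =
  sgn u * \sum_(x in [set y in u]) (-1) ^+ cntS x [set y in u] * phi ([set y in u] :\ x).
Proof.
case: u => [|x0 u'] uu.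
  by rewrite big_ord0 set_nil big_set0 mulr0.
set u := x0 :: u' in uu *.
rewrite mulr_sumr -(sum_nth_set x0 (fun x => sgn u * ((-1) ^+ cntS x [set y in u] * phi ([set y in u] :\ x)))) //.
apply: eq_bigr => i _.
rewrite mulrA (sign_delete x0 uu (ltn_ord i)) (set_delete x0 uu (ltn_ord i)).
by rewrite mulrA.
Qed.

Lemma bdry_seq_alt u : uniq u -> bdry_seq u = cscale (sgn u) (Bd [set y in u]).
Proof.
move=> uu; apply/ffunP => t.
rewrite /bdry_seq cscaleE /Bd !sum_ffunE.
have -> : \sum_(x in [set y in u]) cscale ((-1) ^+ cntS x [set y in u]) (E ([set y in u] :\ x)) t
  = \sum_(x in [set y in u]) (-1) ^+ cntS x [set y in u] * (fun B => E B t) ([set y in u] :\ x).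
  by apply: eq_bigr => x _; rewrite cscaleE.
rewrite -(alt_sum (fun B => E B t) uu); apply: eq_bigr => i _.
by rewrite cscaleE (osimpE (delete_uniq i uu)) cscaleE.
Qed.

Lemma cobdry_alt (T : chain V) u : uniq u ->
  \sum_(i < size u) (-1) ^+ i * ceval T (delete i u) = sgn u * CB T [set y in u].
Proof.
move=> uu; rewrite /CB -(alt_sum T uu); apply: eq_bigr => i _.
by rewrite (cevalE _ (delete_uniq i uu)).
Qed.

Lemma std_uniq A : uniq (std A).
Proof. by rewrite /std sort_uniq enum_uniq. Qed.

Lemma std_set A : [set y in std A] = A.
Proof. by apply/setP => y; rewrite inE /std mem_sort mem_enum. Qed.

Lemma inv_sorted (s : seq V) : sorted (fun x y => (enum_rank x <= enum_rank y)%N) s -> invs s = 0%N.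
Proof.
elim: s => [|a s IH] //= Hs.
have Ha : all (fun y => (enum_rank a <= enum_rank y)%N) s.
  apply: (order_path_min _ Hs) => x y z; exact: leq_trans.
rewrite IH ?(path_sorted Hs) // addn0.
apply/eqP; rewrite -leqn0 leqNgt -has_count; apply/hasPn => y /(allP Ha).
by rewrite -leqNgt.
Qed.

Lemma std_sgn A : sgn (std A) = 1.
Proof.
rewrite sgnE inv_sorted //; apply: sort_sorted => x y; exact: leq_total.
Qed.

Lemma bdry_std A : bdry_seq (std A) = Bd A.
Proof.
rewrite (bdry_seq_alt (std_uniq A)) std_sgn std_set.
by apply/ffunP => t; rewrite cscaleE mul1r.
Qed.

Lemma bdry_ext c : bdry c = ext Bd c.
Proof. by apply: eq_bigr => s _; rewrite bdry_std. Qed.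

Lemma cobdry_CB T A : cobdry T A = CB T A.
Proof.
by rewrite /cobdry ffunE (cobdry_alt T (std_uniq A)) std_sgn std_set mul1r.
Qed.

Lemma ext_add F c d : ext F (c + d) = ext F c + ext F d.
Proof.
apply/ffunP => t; rewrite !ffunE !extE -big_split; apply: eq_bigr => s _.
by rewrite ffunE mulrDl.
Qed.

Lemma ext0 F : ext F 0 = 0.
Proof. by apply/ffunP => t; rewrite extE ffunE big1 // => s _; rewrite ffunE mul0r. Qed.

Lemma ext_scale F a c : ext F (cscale a c) = cscale a (ext F c).
Proof.
apply/ffunP => t; rewrite cscaleE !extE mulr_sumr; apply: eq_bigr => s _.
by rewrite cscaleE mulrA.
Qed.

Lemma ext_opp F c : ext F (- c) = - ext F c.
Proof.
apply/ffunP => t; rewrite !ffunE !extE -sumrN; apply: eq_bigr => s _.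
by rewrite ffunE mulNr.
Qed.

Lemma ext_sub F c d : ext F (c - d) = ext F c - ext F d.
Proof. by rewrite ext_add ext_opp. Qed.

Lemma ext_sum F (I : Type) (r : seq I) (P : pred I) (G : I -> chain V) :
  ext F (\sum_(i <- r | P i) G i) = \sum_(i <- r | P i) ext F (G i).
Proof. exact: (big_morph (ext F) (ext_add F) (ext0 F)). Qed.

Lemma ext_e F A : ext F (e A) = F A.
Proof.
apply/ffunP => t; rewrite extE (bigD1 A) //= big1 ?addr0.
  by rewrite ffunE eqxx mul1r.
by move=> s /negbTE sA; rewrite ffunE sA mul0r.
Qed.

Lemma ext_ext F G c : ext F (ext G c) = ext (fun S : {set V} => ext F (G S)) c.
Proof.
apply/ffunP => t; rewrite !extE.
under eq_bigr do rewrite extE mulr_suml.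
rewrite exchange_big; apply: eq_bigr => s _.
rewrite extE mulr_sumr; apply: eq_bigr => s' _; by rewrite mulrA.
Qed.

Lemma ext_eq_in F G c : (forall s, c s != 0 -> F s = G s) -> ext F c = ext G c.
Proof.
move=> H; apply: eq_bigr => s _; case: (eqVneq (c s) 0) => [->|/H -> //].
by apply/ffunP => t; rewrite !cscaleE !mul0r.
Qed.

Lemma ext_id c : ext e c = c.
Proof.
apply/ffunP => t; rewrite extE (bigD1 t) //= big1 ?addr0.
  by rewrite ffunE eqxx mulr1.
by move=> s st; rewrite ffunE eq_sym (negbTE st) mulr0.
Qed.

Definition supp (P : {set V} -> Prop) c := forall t, c t != 0 -> P t.

Lemma supp_ext (P : {set V} -> Prop) F c :
  (forall s, c s != 0 -> supp P (F s)) -> supp P (ext F c).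
Proof.
move=> H t; rewrite extE.
case: (pickP (fun s => c s * F s t != 0)) => [s /=|H0].
  rewrite mulf_eq0 negb_or => /andP[h1 h2] _; exact: (H s h1 t h2).
by rewrite big1 ?eqxx // => s _; move/negbFE: (H0 s) => /eqP.
Qed.

Lemma supp_add P c d : supp P c -> supp P d -> supp P (c + d).
Proof.
move=> hc hd t; rewrite ffunE; case: (eqVneq (c t) 0) => [->|/hc //].
by rewrite add0r => /hd.
Qed.

Lemma supp_opp P c : supp P c -> supp P (- c).
Proof. by move=> hc t; rewrite ffunE oppr_eq0 => /hc. Qed.

Lemma supp_sub P c d : supp P c -> supp P d -> supp P (c - d).
Proof. by move=> hc hd; apply: supp_add => //; apply: supp_opp. Qed.

Lemma supp0 P : supp P 0.
Proof. by move=> t; rewrite ffunE eqxx. Qed.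

Lemma supp_scale P a c : supp P c -> supp P (cscale a c).
Proof. by move=> hc t; rewrite cscaleE mulf_eq0 negb_or => /andP[_ /hc]. Qed.

Lemma supp_e (P : {set V} -> Prop) A : P A -> supp P (e A).
Proof. by move=> hA t; rewrite ffunE; case: (eqVneq t A) => [->|] //; rewrite eqxx. Qed.

Lemma supp_E (P : {set V} -> Prop) A : (A != set0 -> P A) -> supp P (E A).
Proof.
move=> hA t; rewrite ffunE; case: (eqVneq t A) => [->|] /=; last by [].
by case: (A != set0) hA => // ->.
Qed.

Lemma supp_weak (P Q : {set V} -> Prop) c : (forall t, P t -> Q t) -> supp P c -> supp Q c.
Proof. by move=> H hc t /hc /H. Qed.

Lemma supp_zero (P : {set V} -> Prop) c : (forall t, ~ P t) -> supp P c -> c = 0.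
Proof.
move=> H hc; apply/ffunP => t; rewrite ffunE; apply/eqP; apply/negP => /negP /hc.
exact: H.
Qed.

Lemma supp_sum P (I : Type) (r : seq I) (Q : pred I) (G : I -> chain V) :
  (forall i, Q i -> supp P (G i)) -> supp P (\sum_(i <- r | Q i) G i).
Proof.
move=> H; elim/big_rec: _ => [|i x Qi hx]; first exact: supp0.
by apply: supp_add => //; apply: H.
Qed.

End Chains.


Section Bdry.
Variable V : finType.
Implicit Types (u : seq V) (A B : {set V}) (c d : chain V).

Lemma rank_cmp (x y : V) : x != y ->
  ((enum_rank x < enum_rank y) + (enum_rank y < enum_rank x))%N = 1%N.
Proof.
move=> xy; have : enum_rank x != enum_rank y by rewrite (inj_eq enum_rank_inj).
move=> /eqP H.
have : (nat_of_ord (enum_rank x) != enum_rank y) by apply/eqP => E; apply: H; apply: val_inj.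
rewrite neq_ltn => /orP[] h.
- by rewrite h ltnNge ltnW.
- by rewrite h ltnNge ltnW.
Qed.

Lemma cntS_D1 x y A : x \in A ->
  cntS y A = (cntS y (A :\ x) + (enum_rank x < enum_rank y))%N.
Proof.
move=> xA; rewrite /cntS (cardsD1 x) addnC; congr (_ + _)%N.
  by apply: eq_card => z; rewrite !inE andbA.
by rewrite !inE xA.
Qed.

Lemma cntS_U1 w y A : w \notin A ->
  cntS y (w |: A) = (cntS y A + (enum_rank w < enum_rank y))%N.
Proof.
move=> wA; rewrite (cntS_D1 y (setU11 w A)); congr (_ + _)%N.
by rewrite setU1K.
Qed.

Lemma cntS_self x A : cntS x (A :\ x) = cntS x A.
Proof.
case: (boolP (x \in A)) => xA; first by rewrite (cntS_D1 x xA) ltnn addn0.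
by congr cntS; apply/setP => z; rewrite !inE; case: eqP => // ->; rewrite (negbTE xA).
Qed.

Lemma E_e A : E A = if A != set0 then e A else 0.
Proof.
apply/ffunP => t; case: ifP => h; rewrite !ffunE ?h ?andbT //.
by rewrite andbF.
Qed.

Lemma ext_E F A : ext F (E A) = if A != set0 then F A else 0.
Proof. by rewrite E_e; case: ifP => _; rewrite ?ext_e ?ext0. Qed.

Lemma Bd0 : Bd (set0 : {set V}) = 0.
Proof. by rewrite /Bd big_set0. Qed.

Lemma bdry_e A : bdry (e A) = Bd A.
Proof. by rewrite bdry_ext ext_e. Qed.

Lemma bdry_E A : bdry (E A) = Bd A.
Proof. by rewrite bdry_ext ext_E; case: eqP => // ->; rewrite Bd0. Qed.

Lemma bdry_add c d : bdry (c + d) = bdry c + bdry d.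
Proof. by rewrite !bdry_ext ext_add. Qed.
Lemma bdry_sub c d : bdry (c - d) = bdry c - bdry d.
Proof. by rewrite !bdry_ext ext_sub. Qed.
Lemma bdry_scale a c : bdry (cscale a c) = cscale a (bdry c).
Proof. by rewrite !bdry_ext ext_scale. Qed.
Lemma bdry_sum (I : Type) (r : seq I) (P : pred I) (G : I -> chain V) :
  bdry (\sum_(i <- r | P i) G i) = \sum_(i <- r | P i) bdry (G i).
Proof. by rewrite bdry_ext ext_sum; apply: eq_bigr => i _; rewrite bdry_ext. Qed.
Lemma bdry0 : bdry (0 : chain V) = 0.
Proof. by rewrite bdry_ext ext0. Qed.

Lemma sign_flip (a b : nat) : odd a != odd b -> (-1) ^+ a = - (-1) ^+ b :> rat.
Proof.
move=> h; rewrite -(signr_odd _ a) -(signr_odd _ b).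
by move: h; case: (odd a); case: (odd b).
Qed.

Lemma antisym_sum (h : V -> V -> rat) A :
  (forall x y, x \in A -> y \in A -> x != y -> h y x = - h x y) ->
  \sum_(x in A) \sum_(y in A :\ x) h x y = 0.
Proof.
move=> H.
set S := \sum_(x in A) _.
have HS : S = \sum_x \sum_y (if (x \in A) && (y \in A) && (y != x) then h x y else 0).
  rewrite /S big_mkcond; apply: eq_bigr => x _.
  case: (boolP (x \in A)) => xA /=.
    rewrite big_mkcond; apply: eq_bigr => y _; by rewrite !inE andbC.
  by rewrite big1.
have HS2 : S = - S.
  rewrite {1}HS exchange_big /= HS -sumrN; apply: eq_bigr => y _.
  rewrite -sumrN; apply: eq_bigr => x _.
  case: (boolP (x \in A)) => xA; case: (boolP (y \in A)) => yA /=; rewrite ?oppr0 //.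
  case: (eqVneq x y) => [->|xy] /=; first by rewrite oppr0.
  by rewrite (H x y xA yA xy) opprK.
by lra.
Qed.

Lemma Bd_Bd A : bdry (Bd A) = 0.
Proof.
rewrite /Bd bdry_sum.
apply/ffunP => t; rewrite sum_ffunE ffunE.
have -> : \sum_(x in A) bdry (cscale ((-1) ^+ cntS x A) (E (A :\ x))) t =
  \sum_(x in A) \sum_(y in A :\ x)
     ((-1) ^+ cntS x A * ((-1) ^+ cntS y (A :\ x) * E (A :\ x :\ y) t)).
  apply: eq_bigr => x _; rewrite bdry_scale bdry_E cscaleE /Bd sum_ffunE mulr_sumr.
  by apply: eq_bigr => y _; rewrite cscaleE.
apply: antisym_sum => x y xA yA xy.
have -> : A :\ y :\ x = A :\ x :\ y by rewrite !setDDl setUC.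
rewrite !mulrA -!exprD -mulNr; congr (_ * _); apply: sign_flip.
rewrite (cntS_D1 y xA) (cntS_D1 x yA).
have yAx : y \in A :\ x by rewrite !inE eq_sym xy.
have xAy : x \in A :\ y by rewrite !inE xy.
move: (rank_cmp xy); rewrite !oddD.
case: (enum_rank x < enum_rank y)%N; case: (enum_rank y < enum_rank x)%N => //= _;
by case: (odd (cntS y _)); case: (odd (cntS x _)).
Qed.

Lemma bdry_bdry c : bdry (bdry c) = 0.
Proof.
rewrite [bdry c]bdry_ext bdry_ext ext_ext.
apply/ffunP => t; rewrite extE ffunE big1 // => S _.
by rewrite -bdry_ext Bd_Bd ffunE mulr0.
Qed.

End Bdry.


Section Cone.
Variable V : finType.
Implicit Types (u : seq V) (A B : {set V}) (c d : chain V).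

Definition coneS (w : V) A : chain V :=
  if w \in A then 0 else cscale ((-1) ^+ cntS w A) (e (w |: A)).
Definition cone (w : V) c := ext (coneS w) c.

Lemma cscale0 a : cscale a (0 : chain V) = 0.
Proof. by apply/ffunP => t; rewrite cscaleE ffunE mulr0. Qed.

Lemma sign_eq (a b : nat) : odd a = odd b -> (-1) ^+ a = (-1) ^+ b :> rat.
Proof. by move=> h; rewrite -(signr_odd _ a) h signr_odd. Qed.

Lemma Cw w A : w \notin A -> A != set0 ->
  bdry (coneS w A) = e A - \sum_(x in A)
      cscale ((-1) ^+ (cntS x A + cntS w (A :\ x))) (e (w |: (A :\ x))).
Proof.
move=> wA A0; rewrite /coneS (negbTE wA) bdry_scale bdry_e.
apply/ffunP => t; rewrite cscaleE !ffunE /Bd !sum_ffunE.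
rewrite (bigD1 w) ?setU11 //= cscaleE setU1K // E_e A0.
rewrite (cntS_U1 w wA) ltnn addn0 mulrDr mulrA sign_sq mul1r.
congr (_ + _); first by rewrite ffunE.
rewrite mulr_sumr -sumrN.
rewrite (eq_bigl (fun i => i \in A)); last first.
  move=> i /=; rewrite !inE; case: (eqVneq i w) => [->|] /=; by rewrite ?(negbTE wA) ?andbT ?andbF.
apply: eq_bigr => x xA.
have xw : x != w by apply/eqP => Ex; rewrite -Ex xA in wA.
have -> : (w |: A) :\ x = w |: (A :\ x).
  by apply/setP => z; rewrite !inE; case: (eqVneq z w) => // ->; rewrite eq_sym xw.
rewrite !cscaleE E_e.
have -> : (w |: A :\ x != set0) by apply/set0Pn; exists w; rewrite setU11.
rewrite mulrA -exprD -mulNr; congr (_ * _); apply: sign_flip.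
rewrite (cntS_U1 x wA) (cntS_D1 w xA).
move: (rank_cmp xw); rewrite !oddD.
case: (enum_rank x < enum_rank w)%N; case: (enum_rank w < enum_rank x)%N => //= _;
by case: (odd (cntS w _)); case: (odd (cntS x _)).
Qed.

Lemma cone_E w B : cone w (E B) = if B != set0 then coneS w B else 0.
Proof. by rewrite /cone ext_E. Qed.

Lemma cone_Bd w A : cone w (Bd A) =
  \sum_(x in A) cscale ((-1) ^+ cntS x A) (cone w (E (A :\ x))).
Proof. by rewrite /cone /Bd ext_sum; apply: eq_bigr => x _; rewrite ext_scale. Qed.

Lemma card_gt1_D1 (x : V) A : x \in A -> (1 < #|A|)%N -> A :\ x != set0.
Proof.
move=> xA hA; apply/eqP => Ex; move: hA; rewrite (cardsD1 x A) xA Ex cards0 //.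
Qed.

Lemma C1 w A : (1 < #|A|)%N -> bdry (coneS w A) = e A - cone w (Bd A).
Proof.
move=> hA.
have A0 : A != set0 by apply/eqP => Ex; rewrite Ex cards0 in hA.
rewrite cone_Bd.
case: (boolP (w \in A)) => wA.
  rewrite /coneS wA bdry0 (bigD1 w) //= cone_E (card_gt1_D1 wA hA) /coneS.
  rewrite !inE eqxx /= setD1K // cntS_self big1.
    rewrite addr0; apply/ffunP => t; rewrite !ffunE mulrA sign_sq mul1r subrr //.
  move=> x /andP[xA xw]; rewrite cone_E (card_gt1_D1 xA hA) /coneS !inE eq_sym xw wA /=.
  exact: cscale0.
rewrite (Cw wA A0); congr (_ - _); apply: eq_bigr => x xA.
rewrite cone_E (card_gt1_D1 xA hA) /coneS !inE (negbTE wA) andbF.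
by apply/ffunP => t; rewrite !cscaleE mulrA -exprD.
Qed.

Lemma cntS_set0 y : cntS y (set0 : {set V}) = 0%N.
Proof. by rewrite /cntS; apply/eqP; rewrite cards_eq0; apply/eqP/setP => z; rewrite !inE. Qed.

Lemma C0 w a : bdry (coneS w [set a]) = e [set a] - e [set w].
Proof.
case: (eqVneq w a) => [->|wa].
  by rewrite /coneS set11 bdry0 subrr.
have wA : w \notin [set a] by rewrite inE.
have A0 : [set a] != set0 by apply/set0Pn; exists a; rewrite set11.
rewrite (Cw wA A0) big_set1 -(cntS_self a [set a]).
have -> : [set a] :\ a = set0 by apply/setP => z; rewrite !inE; case: eqP.
rewrite !cntS_set0 setU0 /=; congr (_ - _); apply/ffunP => t; by rewrite cscaleE mul1r.
Qed.

Lemma ext_fsub F G c : ext (fun A => F A - G A) c = ext F c - ext G c.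
Proof.
apply/ffunP => t; rewrite !ffunE !extE -sumrB; apply: eq_bigr => S _.
by rewrite !ffunE mulrBr.
Qed.

Lemma cone_hi w (x : chain V) : supp (fun t => 1 < #|t|)%N x -> bdry (cone w x) = x - cone w (bdry x).
Proof.
move=> hx; rewrite /cone bdry_ext ext_ext.
rewrite (ext_eq_in (G := fun A => e A - cone w (Bd A))); last first.
  by move=> S /hx hS; rewrite -bdry_ext (C1 w hS).
rewrite ext_fsub ext_id; congr (_ - _).
by rewrite bdry_ext ext_ext.
Qed.

Lemma ext_const C c : ext (fun _ => C) c = cscale (\sum_S c S) C.
Proof. by apply/ffunP => t; rewrite extE cscaleE mulr_suml. Qed.

Lemma cone_lo w (x : chain V) : supp (fun t => #|t| = 1%N) x ->
  bdry (cone w x) = x - cscale (\sum_S x S) (e [set w]).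
Proof.
move=> hx; rewrite /cone bdry_ext ext_ext.
rewrite (ext_eq_in (G := fun A => e A - e [set w])); last first.
  move=> S /hx /eqP /cards1P [a ->]; by rewrite -bdry_ext C0.
by rewrite ext_fsub ext_id ext_const.
Qed.

Lemma supp_cone w (S : {set V}) k (x : chain V) : w \in S ->
  supp (fun t => t \subset S /\ #|t| = k) x ->
  supp (fun t => t \subset S /\ #|t| = k.+1) (cone w x).
Proof.
move=> wS hx; apply: supp_ext => A /hx [AS cA].
rewrite /coneS; case: ifP => wA; first exact: supp0.
apply: supp_scale; apply: supp_e; split.
  by rewrite subUset sub1set wS.
by rewrite cardsU1 wA cA.
Qed.

Lemma cone_add w c d : cone w (c + d) = cone w c + cone w d.
Proof. exact: ext_add. Qed.

End Cone.


Section Seqs.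
Variable V : finType.
Implicit Types (o u : seq V).

Lemma delete0 a o : delete 0 (a :: o) = o.
Proof. by rewrite /delete /= drop0. Qed.
Lemma deleteS i a o : delete i.+1 (a :: o) = a :: delete i o.
Proof. by []. Qed.
Lemma delete_nil i : delete i ([::] : seq V) = [::].
Proof. by []. Qed.

Lemma T1 o i p : (i <= p)%N -> take p.+1 (delete i o) = delete i (take p.+2 o).
Proof.
elim: o i p => [|a o IH] i p hi; first by rewrite !delete_nil.
case: i hi => [|i] hi; first by rewrite delete0 /= delete0.
case: p hi => [|p] // hi; rewrite deleteS /= deleteS IH //.
Qed.

Lemma T2 o i p : (i <= p)%N -> drop p (delete i o) = drop p.+1 o.
Proof.
elim: o i p => [|a o IH] i p hi; first by rewrite !delete_nil.
case: i hi => [|i] hi; first by rewrite delete0.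
case: p hi => [|p] // hi; rewrite deleteS /= IH //.
Qed.

Lemma T3 o i p : (p < i)%N -> take p.+1 (delete i o) = take p.+1 o.
Proof.
elim: o i p => [|a o IH] i p hi; first by rewrite !delete_nil.
case: i hi => [|i] // hi; rewrite deleteS /=.
case: p hi => [|p] hi; first by rewrite !take0.
by rewrite IH.
Qed.

Lemma T4 o i p : (p <= i)%N -> drop p (delete i o) = delete (i - p) (drop p o).
Proof.
elim: o i p => [|a o IH] i p hi; first by rewrite !delete_nil.
case: p hi => [|p] hi; first by rewrite !drop0 subn0.
case: i hi => [|i] // hi; rewrite deleteS /= IH //.
Qed.

Lemma T5 o p : delete p.+1 (take p.+2 o) = take p.+1 o.
Proof.
elim: o p => [|a o IH] p //=.
case: p => [|p]; rewrite deleteS ?IH //.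
by case: o {IH} => [|b o] //=; rewrite delete0 take0.
Qed.

Lemma size_delete i o : (i < size o)%N -> size (delete i o) = (size o).-1.
Proof.
move=> hi; rewrite /delete size_cat size_take size_drop hi; lia.
Qed.

Definition capseq (T : chain V) (p : nat) o : chain V :=
  cscale (ceval T (take p.+1 o)) (osimp (drop p o)).

Lemma sign_even (p j : nat) : ~~ odd p -> (-1) ^+ (j + p) = (-1) ^+ j :> rat.
Proof. by move=> hp; rewrite exprD -(signr_odd _ p) (negbTE hp) mulr1. Qed.

Lemma seq_cap (T : chain V) (p : nat) o :
  ~~ odd p -> uniq o ->
  ((p.+2 <= size o)%N ->
     \sum_(i < p.+2) (-1) ^+ i * ceval T (delete i (take p.+2 o)) = 0) ->
  (forall u, size u != p.+1 -> ceval T u = 0) ->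
  cscale (ceval T (take p.+1 o)) (bdry_seq (drop p o)) =
  \sum_(i < size o) cscale ((-1) ^+ i) (capseq T p (delete i o)).
Proof.
move=> hp uo Hcoc Hsz.
set n := size o.
case: (leqP n p) => hn.
  rewrite Hsz; last by rewrite size_take; case: ltnP => h; lia.
  rewrite big1.
    by apply/ffunP => t; rewrite cscaleE ffunE mul0r.
  move=> i _; rewrite /capseq Hsz ?cscale0.
    by apply/ffunP => t; rewrite !cscaleE mul0r mulr0 ffunE.
  rewrite size_take size_delete ?ltn_ord //; case: ltnP => h; lia.
apply/ffunP => t.
rewrite cscaleE /bdry_seq !sum_ffunE.
under [RHS]eq_bigr do rewrite !cscaleE.
under [in LHS]eq_bigr do rewrite cscaleE.
rewrite -(big_mkord xpredT (fun i => (-1) ^+ i * (ceval T (take p.+1 (delete i o)) * osimp (drop p (delete i o)) t))).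
rewrite (big_cat_nat _ (n := p.+1)) //=.
rewrite size_drop -/n.
rewrite -(big_mkord xpredT (fun i => (-1) ^+ i * osimp (delete i (drop p o)) t)).
have hnp : (0 < n - p)%N by lia.
rewrite big_ltn // mulrDr.
congr (_ + _).
-
  have -> : delete 0 (drop p o) = drop p.+1 o by rewrite /delete take0 cat0s drop_drop add1n.
  rewrite expr0 mul1r.
  have -> : \sum_(0 <= i < p.+1) (-1) ^+ i * (ceval T (take p.+1 (delete i o)) * osimp (drop p (delete i o)) t)
     = (\sum_(0 <= i < p.+1) (-1) ^+ i * ceval T (delete i (take p.+2 o))) * osimp (drop p.+1 o) t.
    rewrite big_distrl /=; apply: eq_big_nat => i /andP[_ hi].
    by rewrite T1 ?T2 // mulrA.
  case: (leqP p.+2 n) => hn2; last first.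
    have -> : drop p.+1 o = [::] by apply: drop_oversize; lia.
    by rewrite /osimp /= !ffunE !mulr0.
  congr (_ * _).
  have := Hcoc hn2; rewrite big_ord_recr /= T5 big_mkord => H.
  have : \sum_(i < p.+1) (-1) ^+ i * ceval T (delete i (take p.+2 o)) =
         - ((-1) ^+ p.+1 * ceval T (take p.+1 o)) by apply/eqP; rewrite -addr_eq0 H.
  move=> ->; rewrite exprS -signr_odd (negbTE hp) expr0 mulr1 mulN1r opprK //.
-
  rewrite mulr_sumr.
  rewrite -(add1n p) big_addn.
  apply: eq_big_nat => j /andP[hj1 hj2].
  rewrite sign_even // T3; last by lia.
  rewrite T4; last by lia.
  rewrite addnK; ring.
Qed.

End Seqs.


Section Cap.
Variable V : finType.
Variables (K : {set {set V}}) (O : rel V) (p : nat) (T : chain V).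
Hypothesis hK : is_complex K.
Hypothesis hO : is_ordering K O.

Definition osort (S : {set V}) := sort O (enum S).
Definition capS (S : {set V}) : chain V :=
  cscale (sgn (osort S) * ceval T (take p.+1 (osort S))) (osimp (drop p (osort S))).

Lemma capO_ext c : capO O p T c = ext capS c.
Proof.
apply/ffunP => t; rewrite extE /capO sum_ffunE; apply: eq_bigr => S _.
by rewrite !cscaleE -/(osort S) !mulrA.
Qed.

Lemma subK (S B : {set V}) : S \in K -> B \subset S -> B != set0 -> B \in K.
Proof. by case: hK => _ H; exact: H. Qed.

Lemma vertK (S : {set V}) x : S \in K -> x \in S -> x \in vert K.
Proof.
move=> SK xS; rewrite inE; apply: (subK SK); first by rewrite sub1set.
by apply/set0Pn; exists x; rewrite set11.
Qed.

Lemma osort_uniq S : uniq (osort S).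
Proof. by rewrite /osort sort_uniq enum_uniq. Qed.

Lemma osort_set S : [set y in osort S] = S.
Proof. by apply/setP => y; rewrite inE /osort mem_sort mem_enum. Qed.

Lemma mem_osort S y : (y \in osort S) = (y \in S).
Proof. by rewrite /osort mem_sort mem_enum. Qed.

Lemma O_trans : {in [pred x | x \in vert K] & &, transitive O}.
Proof. case: hO => _ _ H _ y x z hy hx hz; exact: H. Qed.

Lemma osort_sorted S : S \in K -> sorted O (osort S).
Proof.
move=> SK; apply: (sort_sorted_in (P := [pred x | x \in S])); last first.
  by apply/allP => y; rewrite mem_enum.
case: hO => _ _ _ H x y hx hy; exact: H SK x y hx hy.
Qed.

Lemma allK S : S \in K -> all [pred x | x \in vert K] (osort S).
Proof. by move=> SK; apply/allP => y; rewrite mem_osort /= => /(vertK SK). Qed.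

Lemma osort_pairwise S : S \in K -> pairwise O (osort S).
Proof.
move=> SK; rewrite -(sorted_pairwise_in O_trans (allK SK)); exact: osort_sorted.
Qed.

Lemma osort_eq (u : seq V) : uniq u -> pairwise O u -> [set y in u] \in K -> osort [set y in u] = u.
Proof.
move=> uu pu uK.
have aK : all [pred x | x \in vert K] u.
  by apply/allP => y yu /=; apply: (vertK uK); rewrite inE.
have hv : forall y, y \in osort [set y in u] -> y \in vert K.
  by move=> y; rewrite mem_osort => /(vertK uK).
apply: (@sorted_eq_in _ O).
- by move=> y x z hy hx hz; apply: O_trans; rewrite /= hv.
- move=> x y hx hy /andP[h1 h2]; case: hO => _ H _ _.
  exact: H _ _ (hv _ hx) (hv _ hy) h1 h2.
- exact: osort_sorted.
- by rewrite (sorted_pairwise_in O_trans aK).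
- apply: uniq_perm => //; first exact: osort_uniq.
  by move=> y; rewrite mem_osort inE.
Qed.

Lemma ext_capS_osimp (u : seq V) : uniq u -> pairwise O u -> (u != [::] -> [set y in u] \in K) ->
  ext capS (osimp u) = capseq T p u.
Proof.
move=> uu pu uK; rewrite (osimpE uu) ext_scale ext_E.
case: u uu pu uK => [|x u'] uu pu uK.
  by rewrite set_nil eqxx cscale0 /capseq /= /osimp /= cscale0.
rewrite set_cons_n0 /capS osort_eq //; last exact: uK.
apply/ffunP => t; rewrite /capseq !cscaleE !mulrA sign_sq mul1r //.
Qed.

Lemma bdry_osimp (u : seq V) : uniq u -> bdry (osimp u) = bdry_seq u.
Proof. by move=> uu; rewrite (osimpE uu) bdry_scale bdry_E (bdry_seq_alt uu). Qed.

Lemma e_osimp S : S != set0 -> e S = cscale (sgn (osort S)) (osimp (osort S)).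
Proof.
move=> S0; rewrite (osimpE (osort_uniq S)) osort_set E_e S0.
by apply/ffunP => t; rewrite !cscaleE mulrA sign_sq mul1r.
Qed.

Lemma cscale_sum a (I : Type) (r : seq I) (P : pred I) (G : I -> chain V) :
  cscale a (\sum_(i <- r | P i) G i) = \sum_(i <- r | P i) cscale a (G i).
Proof.
apply/ffunP => t; rewrite cscaleE !sum_ffunE mulr_sumr; apply: eq_bigr => i _.
by rewrite cscaleE.
Qed.

Lemma cscaleA a b (c : chain V) : cscale a (cscale b c) = cscale (a * b) c.
Proof. by apply/ffunP => t; rewrite !cscaleE mulrA. Qed.

Lemma delete_subseq (i : nat) (s : seq V) : subseq (delete i s) s.
Proof.
rewrite /delete -{3}(cat_take_drop i s); apply: cat_subseq => //.
have -> : drop i.+1 s = drop 1 (drop i s) by rewrite drop_drop add1n.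
exact: drop_subseq.
Qed.

Hypothesis hp : ~~ odd p.
Hypothesis hT : forall B : {set V}, T B != 0 -> #|B| = p.+1.
Hypothesis hcoc : cocycle K T.

Lemma ceval_sz (u : seq V) : size u != p.+1 -> ceval T u = 0.
Proof.
move=> hu; rewrite /ceval; case: ifP => uu //.
case: (eqVneq (T [set y in u]) 0) => [->|/hT]; first by rewrite mulr0.
have -> : #|[set y in u]| = size u by rewrite cardsE; apply/card_uniqP.
by move=> h; rewrite h eqxx in hu.
Qed.

Lemma chain_map S : S \in K -> bdry (capS S) = capO O p T (bdry (e S)).
Proof.
move=> SK.
have S0 : S != set0 by case: hK => H _; exact: H.
set o := osort S.
have uo : uniq o := osort_uniq S.
have po : pairwise O o := osort_pairwise SK.
have so : [set y in o] = S := osort_set S.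
rewrite capO_ext (e_osimp S0) -/o bdry_scale ext_scale (bdry_osimp uo).
rewrite /bdry_seq ext_sum /capS -/o -cscaleA bdry_scale; congr (cscale _ _).
rewrite bdry_scale (bdry_osimp (drop_uniq p uo)).
rewrite (seq_cap hp uo); last first.
- exact: ceval_sz.
- move=> hn; set u := take p.+2 o.
  have uu : uniq u by rewrite take_uniq.
  have hs : size u = p.+2 by rewrite size_take; case: ltnP => h; lia.
  have := cobdry_alt T uu; rewrite hs => ->.
  rewrite -cobdry_CB hcoc ?mulr0 //.
  apply: (subK SK).
    by apply/subsetP => y; rewrite inE -so inE => /mem_take.
  by case: u hs {uu} => [|x u'] // _; apply: set_cons_n0.
apply: eq_bigr => i _; rewrite ext_scale ext_capS_osimp //.
- exact: delete_uniq.
- apply: (subseq_pairwise _ po); exact: delete_subseq.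
- move=> hne; apply: (subK SK).
    by apply/subsetP => y; rewrite inE -so inE /delete mem_cat => /orP[/mem_take|/mem_drop].
  by case: (delete i o) hne => // x u' _; apply: set_cons_n0.
Qed.

End Cap.


Section Supp.
Variable V : finType.
Variables (K L : {set {set V}}) (O : rel V) (p : nat) (T : chain V).
Hypothesis hK : is_complex K.
Hypothesis hO : is_ordering K O.
Hypothesis hG : forall v w, v \in vert L -> w \in vert K -> O v w -> w \in vert L.
Hypothesis hT : rel_cochain K (far_part K L) p T.

Lemma cscale0l (c : chain V) : cscale 0 c = 0.
Proof. by apply/ffunP => t; rewrite cscaleE ffunE mul0r. Qed.

Lemma good_drop (o : seq V) v y : pairwise O o -> v \in take p.+1 o -> v \in vert L ->
  y \in drop p o -> y \in vert K -> y \in vert L.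
Proof.
move=> po hv vL hy yK.
have := po; rewrite -(cat_take_drop p o) pairwise_cat => /and3P[hall _ pd].
move: hv; rewrite -addn1 takeD mem_cat => /orP[hv|hv].
  by apply: (hG vL yK); move/allrelP: hall; apply.
move: hy pd hv; case: (drop p o) => [|a r] //; rewrite inE /= => /orP[/eqP ->|hy].
  by move=> _; rewrite take0 inE => /eqP <-.
move=> /andP[ha _]; rewrite take0 inE => /eqP Hv; subst v.
by apply: (hG vL yK); move/allP: ha; apply.
Qed.

Lemma size_osort (S : {set V}) : size (osort O S) = #|S|.
Proof. by rewrite /osort size_sort cardE. Qed.

Lemma supp_capS S : S \in K ->
  supp (fun t => t \subset S :&: vert L /\ (#|t| + p)%N = #|S| /\ t != set0) (capS O p T S).
Proof.
move=> SK; rewrite /capS; set o := osort O S.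
have uo : uniq o := osort_uniq O S.
have po : pairwise O o := osort_pairwise hK hO SK.
case: (eqVneq (ceval T (take p.+1 o)) 0) => [->|hne].
  by rewrite mulr0 cscale0l; apply: supp0.
apply: supp_scale; rewrite (osimpE (drop_uniq p uo)); apply: supp_scale.
apply: supp_E => hne0.
move: hne; rewrite /ceval take_uniq // mulf_eq0 negb_or => /andP[_ /hT [BK _ BW]].
have : ~~ [disjoint [set y in take p.+1 o] & vert L].
  by move: BW; rewrite /far_part inE BK.
rewrite -setI_eq0 => /set0Pn [v]; rewrite in_setI => /andP[]; rewrite inE => vt vL.
split; [|split].
- apply/subsetP => y; rewrite inE => yd.
  have yS : y \in S by rewrite -(mem_osort O) (mem_drop yd).
  rewrite in_setI yS /=; apply: (good_drop po vt vL yd); exact: (vertK hK SK yS).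
- have -> : #|[set y in drop p o]| = size (drop p o).
    by rewrite cardsE; apply/card_uniqP; rewrite drop_uniq.
  rewrite size_drop size_osort.
  have : (0 < size (drop p o))%N.
    by case: (drop p o) hne0 => // ; rewrite set_nil eqxx.
  rewrite size_drop size_osort; lia.
- exact: hne0.
Qed.

Lemma sum_e (A : {set V}) : \sum_t (e A) t = 1.
Proof.
rewrite (bigD1 A) //= big1 ?addr0; first by rewrite ffunE eqxx.
by move=> t /negbTE h; rewrite ffunE h.
Qed.

Lemma aug_capS (S : {set V}) : #|S| = p.+1 -> \sum_t (capS O p T S) t = T S.
Proof.
move=> hS; rewrite /capS; set o := osort O S.
have uo : uniq o := osort_uniq O S.
have so : size o = p.+1 by rewrite size_osort.
rewrite take_oversize ?so // (cevalE _ uo) osort_set.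
have : size (drop p o) = 1%N by rewrite size_drop so subSnn.
case: (drop p o) => [|a [|b r]] // _.
have -> : osimp [:: a] = e [set a].
  apply/ffunP => t; rewrite !ffunE /= /sgn /= expr0 mul1r; congr (_ %:R); congr (_ == _).
  by apply/setP => z; rewrite !inE.
under eq_bigr do rewrite cscaleE.
by rewrite -mulr_sumr sum_e mulr1 mulrA sign_sq mul1r.
Qed.

End Supp.


Section Lin.
Variable V : finType.
Lemma bdry_extG (G : {set V} -> chain V) c : bdry (ext G c) = ext (fun s => bdry (G s)) c.
Proof. by rewrite bdry_ext ext_ext; apply: ext_eq_in => s _; rewrite bdry_ext. Qed.

Lemma ext_bdry_e (G : {set V} -> chain V) c :
  ext (fun s => ext G (bdry (e s))) c = ext G (bdry c).
Proof.
rewrite [bdry c]bdry_ext ext_ext; apply: ext_eq_in => s _; by rewrite bdry_e.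
Qed.

Lemma ext_zero (c : chain V) : ext (fun _ => 0) c = 0.
Proof. by rewrite ext_const cscale0. Qed.
End Lin.

Section Homotopy.
Variable V : finType.
Variables (K L : {set {set V}}) (O1 O2 : rel V) (p : nat) (T : chain V).
Hypothesis hK : is_complex K.
Hypothesis hO1 : good_ordering K L O1.
Hypothesis hO2 : good_ordering K L O2.
Hypothesis hp : ~~ odd p.
Hypothesis hT : rel_cochain K (far_part K L) p T.
Hypothesis hcoc : cocycle K T.

Definition fS (S : {set V}) : chain V := capS O1 p T S - capS O2 p T S.
Definition wS (S : {set V}) : option V := [pick x in S :&: vert L].
Definition coneO (ow : option V) (c : chain V) : chain V :=
  if ow is Some w then cone w c else 0.

Fixpoint Dh (n : nat) (c : chain V) : chain V :=
  match n with
  | 0 => ext (fun S => coneO (wS S) (fS S)) c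
  | n'.+1 => ext (fun S => coneO (wS S) (fS S - Dh n' (bdry (e S)))) c
  end.

Definition prevD (n : nat) (S : {set V}) : chain V :=
  if n is n'.+1 then Dh n' (bdry (e S)) else 0.

Lemma Dh_e n (S : {set V}) : Dh n (e S) = coneO (wS S) (fS S - prevD n S).
Proof. by case: n => [|n] /=; rewrite ext_e ?subr0. Qed.

Lemma Dh_lin n c : Dh n c = ext (fun t => Dh n (e t)) c.
Proof. by case: n => [|n] /=; apply: ext_eq_in => t _; rewrite ext_e. Qed.

Lemma hT' (B : {set V}) : T B != 0 -> #|B| = p.+1.
Proof. by move/hT => []. Qed.

Lemma supp_Bd (S : {set V}) :
  supp (fun t => t \subset S /\ #|t|.+1 = #|S| /\ t != set0) (Bd S).
Proof.
apply: supp_sum => x xS; apply: supp_scale; apply: supp_E => h; split; [|split] => //.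
  exact: subD1set.
by rewrite (cardsD1 x S) xS.
Qed.

Lemma supp_fS (S : {set V}) : S \in K ->
  supp (fun t => t \subset S :&: vert L /\ (#|t| + p)%N = #|S| /\ t != set0) (fS S).
Proof.
move=> SK; case: hO1 => h1 g1; case: hO2 => h2 g2.
apply: supp_sub; [exact: (supp_capS hK h1 g1 hT SK) | exact: (supp_capS hK h2 g2 hT SK)].
Qed.

Lemma aug_fS (S : {set V}) : #|S| = p.+1 -> \sum_t (fS S) t = 0.
Proof.
move=> hS; rewrite /fS.
have subE (c d : chain V) t : (c - d) t = c t - d t by rewrite !ffunE.
under eq_bigr do rewrite subE.
by rewrite big_split sumrN /= !aug_capS // subrr.
Qed.

Lemma homotopy n : forall S : {set V}, S \in K -> #|S| = (p + n).+1 ->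
  supp (fun t => t \subset S :&: vert L /\ #|t| = n.+2) (Dh n (e S)) /\
  bdry (Dh n (e S)) + prevD n S = fS S.
Proof.
elim: n => [|n IH] S SK hS.
- have hx : supp (fun t => t \subset S :&: vert L /\ #|t| = 1%N) (fS S - prevD 0 S).
    rewrite subr0; apply: (supp_weak _ (supp_fS SK)) => t [h1 [h2 _]]; split => //; lia.
  rewrite Dh_e; split.
    rewrite /wS; case: pickP => [w hw|_] /=; last exact: supp0.
    exact: supp_cone hx.
  rewrite /prevD addr0 subr0; rewrite subr0 in hx.
  rewrite /wS; case: pickP => [w hw|h0] /=.
    rewrite (cone_lo w (supp_weak (fun t (h : _ /\ _) => h.2) hx)) aug_fS ?cscale0l ?subr0 //.
    by rewrite hS addn0.
  rewrite bdry0; apply/esym; apply: (supp_zero _ hx) => t [h1 h2].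
  have : t = set0.
    apply/setP => z; rewrite inE; apply/negP => zt; move: (h0 z) => /=.
    by move/subsetP: h1 => /(_ z zt) ->.
  by move=> Ht; rewrite Ht cards0 in h2.
-
  have Hprev : supp (fun t => t \subset S :&: vert L /\ #|t| = n.+2) (prevD n.+1 S).
    rewrite /prevD bdry_e Dh_lin; apply: supp_ext => t /supp_Bd [tS [ht t0]].
    have tK : t \in K by apply: (subK hK SK).
    have [Ha _] := IH t tK ltac:(lia).
    apply: (supp_weak _ Ha) => t' [h1 h2]; split => //.
    apply: (subset_trans h1); exact: setSI.
  have hx : supp (fun t => t \subset S :&: vert L /\ #|t| = n.+2) (fS S - prevD n.+1 S).
    apply: supp_sub => //; apply: (supp_weak _ (supp_fS SK)) => t [h1 [h2 _]]; split => //; lia.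
  rewrite Dh_e; split.
    rewrite /wS; case: pickP => [w hw|_] /=; last exact: supp0.
    exact: supp_cone hx.
  rewrite /wS; case: pickP => [w hw|h0] /=; last first.
    rewrite bdry0 add0r; apply/eqP; rewrite eq_sym -subr_eq0; apply/eqP.
    apply: (supp_zero _ hx) => t [h1 h2].
    have : t = set0.
      apply/setP => z; rewrite inE; apply/negP => zt; move: (h0 z) => /=.
      by move/subsetP: h1 => /(_ z zt) ->.
    by move=> Ht; rewrite Ht cards0 in h2.
  have hx2 : supp (fun t => 1 < #|t|)%N (fS S - prevD n.+1 S) by apply: (supp_weak _ hx) => t [_ ->].
  rewrite (cone_hi w hx2).
  suff -> : bdry (fS S - prevD n.+1 S) = 0 by rewrite /cone ext0 subr0 subrK.
  rewrite bdry_sub /fS bdry_sub.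
  case: hO1 => h1 g1; case: hO2 => h2 g2.
  rewrite !(chain_map hK _ hp hT' hcoc SK) // !capO_ext -ext_fsub.
  rewrite /prevD Dh_lin bdry_extG.
  rewrite (ext_eq_in (F := fun s => bdry (Dh n (e s))) (G := fun t => fS t - prevD n t)); last first.
    move=> t; rewrite bdry_e => /supp_Bd [tS [ht t0]].
    have tK : t \in K by apply: (subK hK SK).
    have [_ Hb] := IH t tK ltac:(lia).
    by rewrite -Hb addrK.
  rewrite ext_fsub (ext_fsub fS (prevD n)).
  have -> : ext (prevD n) (bdry (e S)) = 0.
    case: n {IH Hprev hx hx2 hS} => [|n] /=; first exact: ext_zero.
    rewrite (ext_eq_in (G := fun t => ext (fun u => Dh n (e u)) (bdry (e t)))); last first.
      by move=> t _; rewrite /prevD -Dh_lin.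
    by rewrite ext_bdry_e bdry_bdry ext0.
  by rewrite subr0 /fS ext_fsub subrr.
Qed.

End Homotopy.


Lemma ext_fadd (V : finType) (F G : {set V} -> chain V) c :
  ext (fun A => F A + G A) c = ext F c + ext G c.
Proof.
apply/ffunP => t; rewrite !ffunE !extE -big_split; apply: eq_bigr => S _.
by rewrite ffunE mulrDr.
Qed.

Unset Implicit Arguments.
Theorem propositionB2 (V : finType) (K L Ks : {set {set V}}) (p q : nat)
    (T : chain V) :
  is_complex K -> is_subcomplex L K -> is_full L K -> is_subcomplex Ks K ->
  (0 < p)%N -> ~~ odd p ->
  rel_cochain K (far_part K L) p T -> cocycle K T ->
  (forall O : rel V, good_ordering K L O ->
     (forall c, rel_cycle K Ks (p + q) c ->
        rel_cycle L (Ks :&: L) q (capO O p T c)) /\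
     (forall c, rel_bdry K Ks (p + q) c ->
        rel_bdry L (Ks :&: L) q (capO O p T c))) /\
  (forall O1 O2 : rel V, good_ordering K L O1 -> good_ordering K L O2 ->
     forall c, rel_cycle K Ks (p + q) c ->
       rel_bdry L (Ks :&: L) q (capO O1 p T c - capO O2 p T c)).
Proof.
move=> hK [hLc hLK] hfull [hKsc hKsK] hp0 hp hT hcoc.
have hT' : forall B : {set V}, T B != 0 -> #|B| = p.+1 by move=> B /hT [].
have KsK : forall s, s \in Ks -> s \in K by move=> s; apply/subsetP.
have inKs : forall (s t : {set V}), s \in Ks -> t \subset s -> t != set0 -> t \in Ks.
  by case: hKsc => _ H.
have inL : forall (s t : {set V}), s \in K -> t \subset s :&: vert L -> t != set0 -> t \in L.
  move=> s t sK ts t0; apply: hfull.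
    apply: (subK hK sK) => //; exact: (subset_trans ts (subsetIl _ _)).
  exact: (subset_trans ts (subsetIr _ _)).
have card0 : forall t : {set V}, t != set0 -> (0 < #|t|)%N.
  by move=> t; rewrite card_gt0.
have capsupp : forall O, good_ordering K L O -> forall (c : chain V) (M : {set {set V}}) (k : nat),
    (forall s, s \in M -> s \in K) ->
    (forall s t : {set V}, s \in M -> t \subset s -> t != set0 -> t \in M) ->
    chain_in M (p + k) c -> chain_in (M :&: L) k (capO O p T c).
  move=> O [hO hG] c M k MK Mcl hc.
  rewrite capO_ext; apply: supp_ext => s /hc [sM hs].
  apply: (supp_weak _ (supp_capS hK hO hG hT (MK s sM))) => t [h1 [h2 h3]].
  split; last by lia.
  rewrite in_setI; apply/andP; split.
    apply: (Mcl s) => //; exact: (subset_trans h1 (subsetIl _ _)).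
  exact: (inL s _ (MK s sM) h1 h3).
have bdry_capO : forall O, good_ordering K L O -> forall c : chain V,
    (forall s, c s != 0 -> s \in K) -> bdry (capO O p T c) = capO O p T (bdry c).
  move=> O [hO hG] c hc.
  rewrite capO_ext bdry_extG (ext_eq_in (G := fun s => ext (capS O p T) (bdry (e s)))).
    by rewrite ext_bdry_e capO_ext.
  by move=> s /hc sK; rewrite (chain_map hK hO hp hT' hcoc sK) capO_ext.
split.
  move=> O hO; split.
  - move=> c [hc1 hc2]; split.
      move=> t /(capsupp O hO c K q (fun s h => h) (fun s t h => subK hK h)) hc.
      by case: (hc hc1) => /setIP[_ ->] ->.
    rewrite (bdry_capO O hO c); last by move=> s /hc1 [].
    case: q hc1 hc2 => [|q] hc1 hc2.
      case: hO => hO hG.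
      rewrite capO_ext; apply: supp_ext => s /hc2 [sKs hs].
      apply: (supp_weak _ (supp_capS hK hO hG hT (KsK s sKs))) => t [_ [h2 h3]].
      have := card0 t h3; lia.
    have hc2' : chain_in Ks (p + q) (bdry c).
      move=> s /hc2 [h1 h2]; split => //; rewrite h2; lia.
    exact: (capsupp O hO _ Ks q KsK inKs hc2').
  - move=> c [d [e0 [hd he Hc]]]; rewrite Hc.
    exists (capO O p T d), (capO O p T e0); split.
    + move=> t ht.
      have hd' : chain_in K (p + q.+1) d by rewrite addnS.
      have := capsupp O hO d K q.+1 (fun s h => h) (fun s t h => subK hK h) hd' t ht.
      by case=> /setIP[_ ->] ->.
    + exact: (capsupp O hO e0 Ks q KsK inKs he).
    + rewrite !capO_ext ext_add -!capO_ext bdry_capO //.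
      by move=> s /hd [].
move=> O1 O2 g1 g2 c [hc1 hc2].
have H := homotopy hK g1 g2 hp hT hcoc.
exists (Dh L O1 O2 p T q c), (if q is q'.+1 then Dh L O1 O2 p T q' (bdry c) else 0).
split.
- rewrite /chain_in Dh_lin; apply: supp_ext => s /hc1 [sK hs].
  have [Ha _] := H q s sK hs.
  apply: (supp_weak _ Ha) => t [h1 h2]; split => //.
  apply: (inL s) => //; apply/eqP => t0; rewrite t0 cards0 in h2; done.
- case: q H hc1 hc2 => [|q] H hc1 hc2; first exact: supp0.
  rewrite /chain_in Dh_lin; apply: supp_ext => s /hc2 [sKs hs].
  have [Ha _] := H q s (KsK s sKs) ltac:(rewrite hs; lia).
  apply: (supp_weak _ Ha) => t [h1 h2].
  have t0 : t != set0 by apply/eqP => t0; rewrite t0 cards0 in h2.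
  split => //; rewrite in_setI; apply/andP; split.
    apply: (inKs s) => //; exact: (subset_trans h1 (subsetIl _ _)).
  exact: (inL s t (KsK s sKs) h1 t0).
- rewrite !capO_ext -ext_fsub.
  rewrite (ext_eq_in (G := fun s => bdry (Dh L O1 O2 p T q (e s)) + prevD L O1 O2 p T q s)); last first.
    move=> s /hc1 [sK hs]; have [_ Hb] := H q s sK hs; by rewrite Hb.
  rewrite ext_fadd -bdry_extG -Dh_lin; congr (_ + _).
  case: q {H hc1 hc2} => [|q] /=; first exact: ext_zero.
  rewrite (ext_eq_in (G := fun t => ext (fun u => Dh L O1 O2 p T q (e u)) (bdry (e t)))); last first.
    by move=> t _; rewrite -Dh_lin.
  by rewrite ext_bdry_e -Dh_lin.
Qed.
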